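(* Consider Algorithm 3 (described in the context) under the Standing Assumption, Matrix Assumption and Gradient Assumption of the context. For all $k\in\mathbb{N}$, $\mathbb{E}_k[\bar d_k]=d_k$, $\mathbb{E}_k[\bar u_k]=u_k$, and $\mathbb{E}_k[\bar y_k]=y_k$. Moreover, there exists $\kappa_d>0$, independent of $k$ and of the run of the algorithm, such that $\mathbb{E}_k[\|\bar d_k-d_k\|_2]\le\kappa_d\sqrt M$ for all $k$.
   Context: Problem: $\min_x f(x)$ s.t. $c(x)=0$, $f(x)=\mathbb{E}[F(x,\omega)]$, $c:\mathbb{R}^n\to\mathbb{R}^m$ deterministic. Notation: $g_k=\nabla f(x_k)$, $c_k=c(x_k)$, $J_k=\nabla c(x_k)^T$; $\Delta q(x,\tau,g,H,d)=-\tau(g^Td+\frac12\max\{d^THd,0\})+\|c(x)\|_1$. Standing Assumption: an open convex set $\mathcal X$ contains all iterates; $f$ is $C^1$, bounded below on $\mathcal X$, $\nabla f$ bounded and $L$-Lipschitz on $\mathcal X$; $c$, $\nabla c^T$ bounded on $\mathcal X$; $\nabla c_i$ is $\gamma_i$-Lipschitz on $\mathcal X$; singular values of $\nabla c(x)^T$ bounded away from zero uniformly over $\mathcal X$; $\Gamma:=\sum_i\gamma_i$. Matrix Assumption: deterministic symmetric $H_k$, chosen independently of the stochastic gradients, with $\|H_k\|_2\le\kappa_H$ and $u^TH_ku\ge\zeta\|u\|_2^2$ whenever $J_ku=0$. Algorithm 3 (inputs $x_0$, $\bar\tau_{-1}>0$, $\epsilon,\sigma\in(0,1)$, $\bar\xi_{-1}>0$,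 $\{\beta_k\}\subset(0,1]$, $\theta\ge0$): at iteration $k$, obtain stochastic gradient $\bar g_k$; $(\bar d_k,\bar y_k)$ solves $H_k\bar d_k+J_k^T\bar y_k=-\bar g_k$, $J_k\bar d_k=-c_k$ (assumed $\bar d_k\neq0$). $\bar\tau_k^{trial}=\infty$ if $\bar g_k^T\bar d_k+\max\{\bar d_k^TH_k\bar d_k,0\}\le0$, else $\frac{(1-\sigma)\|c_k\|_1}{\bar g_k^T\bar d_k+\max\{\bar d_k^TH_k\bar d_k,0\}}$; $\bar\tau_k=\bar\tau_{k-1}$ if $\bar\tau_{k-1}\le\bar\tau_k^{trial}$, else $(1-\epsilon)\bar\tau_k^{trial}$. $\bar\xi_k^{trial}=\frac{\Delta q(x_k,\bar\tau_k,\bar g_k,H_k,\bar d_k)}{\bar\tau_k\|\bar d_k\|_2^2}$; $\bar\xi_k=\bar\xi_{k-1}$ if $\bar\xi_{k-1}\le\bar\xi_k^{trial}$, else $(1-\epsilon)\bar\xi_k^{trial}$. With $D_k=(\bar\tau_kL+\Gamma)\|\bar d_k\|_2^2$, $\hat a_k=\beta_k\Delta q(x_k,\bar\tau_k,\bar g_k,H_k,\bar d_k)/D_k$, $\tilde a_k=\hat a_k-4\|c_k\|_1/D_k$, project both onto $[a_k,a_k+\theta\beta_k^2]$ with $a_k=\frac{\beta_k\bar\xi_k\bar\tau_k}{\bar\tau_kL+\Gamma}$ to get $\widehat\alpha_k,\widetilde\alpha_k$; $\bar\alpha_k=\widehat\alpha_k$ if $\widehat\alpha_k<1$, $1$ if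 $\widetilde\alpha_k\le1\le\widehat\alpha_k$, $\widetilde\alpha_k$ if $\widetilde\alpha_k>1$; $x_{k+1}=x_k+\bar\alpha_k\bar d_k$. Gradient Assumption: $\mathbb{E}_k[\bar g_k]=g_k$ and $\mathbb{E}_k[\|\bar g_k-g_k\|_2^2]\le M$, where $\mathbb{E}_k$ is expectation w.r.t. $\omega$ conditioned on the algorithm having reached $x_k$ at iteration $k$. Deterministic counterpart: $(d_k,y_k)$ solves $H_kd_k+J_k^Ty_k=-g_k$, $J_kd_k=-c_k$. Decompositions: $\bar d_k=\bar u_k+v_k$, $d_k=u_k+v_k$ with $\bar u_k,u_k\in\mathrm{Null}(J_k)$, $v_k\in\mathrm{Range}(J_k^T)$. *)

(* Defs.v *)
From HB Require Import structures.
From mathcomp Require Import all_boot all_order all_algebra.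
From mathcomp Require Import all_classical all_reals all_analysis.
Set Implicit Arguments. Unset Strict Implicit. Unset Printing Implicit Defensive.
Import Order.TTheory GRing.Theory Num.Theory.
Import numFieldNormedType.Exports.
Local Open Scope ring_scope.

Definition dotv (R : realType) (n : nat) (u v : 'cV[R]_n) : R :=
  \sum_(i < n) u i 0 * v i 0.
Definition norm2 (R : realType) (n : nat) (u : 'cV[R]_n) : R :=
  Num.sqrt (dotv u u).

Definition convex_set_cV (R : realType) (n : nat) (X : set 'cV[R]_n) : Prop :=
  forall x y (t : R), X x -> X y -> 0 <= t -> t <= 1 ->
    X (t *: x + (1 - t) *: y).

(* the singular values of J (m x n, m <= n) are the square roots of the
   eigenvalues of J J^T; "all singular values >= s" *)
Definition singvals_ge (R : realType) (m n : nat) (J : 'M[R]_(m, n)) (s : R)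
  : Prop :=
  forall a : R, eigenvalue (J *m J^T) a -> s <= Num.sqrt a.

Definition sqp_system (R : realType) (m n : nat) (H : 'M[R]_n)
  (J : 'M[R]_(m, n)) (g : 'cV[R]_n) (cx : 'cV[R]_m)
  (d : 'cV[R]_n) (y : 'cV[R]_m) : Prop :=
  H *m d + J^T *m y = - g /\ J *m d = - cx.

(* Main.v *)
Require Import Defs.
From HB Require Import structures.
From mathcomp Require Import all_boot all_order all_algebra.
From mathcomp Require Import all_classical all_reals all_analysis.
From mathcomp Require Import measurable_realfun.
From mathcomp Require Import ring lra.
Import Order.TTheory GRing.Theory Num.Theory.
Import numFieldNormedType.Exports.
Local Open Scope classical_set_scope.
Local Open Scope ring_scope.
Set Implicit Arguments. Unset Strict Implicit.

Section Alg.
Variable R : realType.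

Lemma dotvE n (u v : 'cV[R]_n) : dotv u v = (u^T *m v) 0 0.
Proof. by rewrite /dotv mxE; apply: eq_bigr => i _; rewrite mxE. Qed.

Lemma dotv_ge0 n (u : 'cV[R]_n) : 0 <= dotv u u.
Proof. by apply: sumr_ge0 => i _; rewrite -expr2 sqr_ge0. Qed.

Lemma norm2_sqr n (u : 'cV[R]_n) : norm2 u ^+ 2 = dotv u u.
Proof. by rewrite /norm2 sqr_sqrtr // dotv_ge0. Qed.

Lemma norm2_ge0 n (u : 'cV[R]_n) : 0 <= norm2 u.
Proof. exact: sqrtr_ge0. Qed.

Lemma dotv_eq0 n (u : 'cV[R]_n) : dotv u u = 0 -> u = 0.
Proof.
move=> h; apply/matrixP => i j; rewrite ord1 mxE.
have : u i 0 * u i 0 = 0.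
  apply/eqP; move/eqP: h; rewrite psumr_eq0; last by move=> k _; rewrite -expr2 sqr_ge0.
  by move/allP/(_ i (mem_index_enum _)).
by move/eqP; rewrite mulf_eq0 orbb => /eqP.
Qed.

Lemma dotv_quad n (w e : 'cV[R]_n) (z : R) :
  dotv (z *: w + e) (z *: w + e) = z^+2 * dotv w w + 2 * z * dotv w e + dotv e e.
Proof.
rewrite /dotv !mulr_sumr -!big_split /=; apply: eq_bigr => i _; rewrite !mxE; ring.
Qed.

Lemma key n m (H : 'M[R]_n) (J : 'M[R]_(m, n)) (zeta : R) (w e : 'cV[R]_n) (z : 'cV[R]_m) :
  0 < zeta ->
  (forall u, J *m u = 0 -> zeta * norm2 u ^+ 2 <= dotv u (H *m u)) ->
  H *m w + J^T *m z = - e -> J *m w = 0 -> norm2 w <= zeta^-1 * norm2 e.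
Proof.
move=> z0 hH hs hJ.
have hw := hH w hJ.
have Hw : H *m w = - e - J^T *m z by rewrite -hs addrK.
have hB : dotv w (H *m w) = - dotv w e.
  rewrite Hw !dotvE mulmxBr mulmxN mulmxA -trmx_mul hJ trmx0 mul0mx subr0.
  by rewrite !mxE.
rewrite hB norm2_sqr in hw.
have hq := dotv_ge0 (zeta *: w + e); rewrite dotv_quad in hq.
have hA := dotv_ge0 w; have hC := dotv_ge0 e.
have h2 : zeta ^+ 2 * dotv w w <= dotv e e by nra.
have h3 : zeta * norm2 w <= norm2 e.
  rewrite /norm2 -[zeta in zeta * _]ger0_norm ?(ltW z0) //.
  rewrite -sqrtr_sqr -sqrtrM ?sqr_ge0 //; exact: ler_wsqrtr.
by rewrite -(ler_pM2l z0) mulrA mulfV ?gt_eqF // mul1r.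
Qed.

Lemma kkt_unit n m (H : 'M[R]_n) (J : 'M[R]_(m, n)) (zeta s : R) :
  0 < zeta ->
  (forall u, J *m u = 0 -> zeta * norm2 u ^+ 2 <= dotv u (H *m u)) ->
  0 < s -> singvals_ge J s ->
  block_mx H J^T J 0 \in unitmx.
Proof.
move=> z0 hH s0 hs.
rewrite -row_free_unit -kermx_eq0; apply/eqP/row_matrixP => i; rewrite row0.
set u := row i _.
have : u *m block_mx H J^T J 0 = 0 by apply/sub_kermxP; exact: row_sub.
rewrite -[u]hsubmxK mul_row_block mulmx0 addr0 -row_mx0 => /eq_row_mx [h1 h2].
set a := (lsubmx u)^T.
have Ja : J *m a = 0 by rewrite /a -[J]trmxK -trmx_mul h2 trmx0.
have ha : dotv a (H *m a) = 0.
  have := congr1 (fun M => (M *m a) 0 0) h1.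
  rewrite /= mulmxDl -!mulmxA Ja mulmx0 addr0 mul0mx => hh.
  by rewrite dotvE trmxK hh mxE.
have a0 : a = 0.
  apply: dotv_eq0; apply/eqP; rewrite eq_le dotv_ge0 andbT.
  have := hH a Ja; rewrite ha norm2_sqr pmulr_rle0 //.
have l0 : lsubmx u = 0 by rewrite -[lsubmx u]trmxK -/a a0 trmx0.
rewrite l0 mul0mx add0r in h1.
have r0 : rsubmx u = 0.
  apply/eqP; apply/negP => /negP nz.
  have ev : eigenvalue (J *m J^T) 0.
    by apply/eigenvalueP; exists (rsubmx u) => //; rewrite mulmxA h1 mul0mx scale0r.
  by have := hs 0 ev; rewrite sqrtr0 leNgt s0.
by rewrite l0 r0 row_mx0.
Qed.
End Alg.
Lemma mx_col_expand (R : realType) n m (A : 'M[R]_(n + m)) (v : 'cV[R]_n) (e : 'cV[R]_m) k :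
  (A *m col_mx v e) k 0 =
  \sum_(j < n) A k (lshift m j) * v j 0 + \sum_(j < m) A k (rshift n j) * e j 0.
Proof.
rewrite mxE big_split_ord /=; congr (_ + _); apply: eq_bigr => j _.
  by rewrite col_mxEu.
by rewrite col_mxEd.
Qed.

Lemma E_affine (R : realType) (dsp : measure_display) (T : measurableType dsp)
  (P : probability T R) n (G : 'I_n -> T -> R) (gv : 'I_n -> R) (b : 'I_n -> R) (a : R) :
  (forall j, P.-integrable setT (fun w => (G j w)%:E)) ->
  (forall j, ('E_P[G j] = (gv j)%:E)%E) ->
  ('E_P[fun w => (\sum_(j < n) b j * G j w + a)%R] = ((\sum_(j < n) b j * gv j + a)%R)%:E)%E.
Proof.
move=> hi he.
have L j : G j \in Lfun P 1 by apply/Lfun1_integrable; exact: hi.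
have -> : (fun w => (\sum_(j < n) b j * G j w + a)%R) =
    (\sum_(Xi <- map (fun j => b j \o* G j) (index_enum 'I_n)) Xi) \+ cst a.
  apply/funext => w /=. rewrite sumrfctE big_map. congr (_ + _). apply: eq_bigr => j _. by rewrite /= mulrC.
rewrite expectationD ?Lfun_cst //; last first.
  rewrite big_seq; apply: rpred_sum => Xi /mapP [j _ ->]; exact: Lfun_scale.
rewrite expectation_sum; last first.
  move=> Xi /mapP [j _ ->]; exact: Lfun_scale.
rewrite big_map expectation_cst.
under eq_bigr => j _ do rewrite expectationZl // he.
by rewrite sumEFin EFinD.
Qed.
Lemma E_sqrt_bound (R : realType) (dsp : measure_display) (T : measurableType dsp)
  (P : probability T R) (Y Z : T -> R) (k M : R) :
  0 < k -> measurable_fun setT Y -> measurable_fun setT Z ->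
  (forall w, 0 <= Z w) -> (forall w, Z w <= k * Y w) ->
  ('E_P[fun w => (Y w ^+ 2)%R] <= M%:E)%E ->
  ('E_P[Z] <= (k * Num.sqrt M)%:E)%E.
Proof.
move=> k0 mY mZ Z0 ZY hM.
have Y0 w : 0 <= Y w.
  by have := le_trans (Z0 w) (ZY w); rewrite pmulr_rge0.
have key t : 0 < t -> ('E_P[Z] <= (k / (2 * t) * M + k * t / 2)%:E)%E.
  move=> t0.
  have mY2 : measurable_fun setT (fun w => Y w ^+ 2).
    by under eq_fun do rewrite expr2; exact: measurable_funM.
  have -> : (k / (2 * t) * M + k * t / 2)%:E =
      ((k / (2 * t))%:E * M%:E + (k * t / 2)%:E)%E by rewrite EFinD EFinM.
  apply: (@le_trans _ _ ((k / (2 * t))%:E * 'E_P[fun w => (Y w ^+ 2)%R] + (k * t / 2)%:E)%E);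
    last first.
    apply: leeD2r; apply: lee_wpmul2l => //.
    by rewrite lee_fin divr_ge0 ?(ltW k0) // mulr_ge0 // ltW.
  rewrite unlock.
  apply: (@le_trans _ _ (\int[P]_w ((k / (2 * t))%:E * (Y w ^+ 2)%:E + (k * t / 2)%:E))%E).
    apply: ge0_le_integral => //.
    - by move=> w _; rewrite lee_fin.
    - by apply/measurable_EFinP.
    - apply: emeasurable_funD; last exact: measurable_cst.
      apply: emeasurable_funM; first exact: measurable_cst.
      exact/measurable_EFinP.
    - move=> w _; rewrite -EFinM -EFinD lee_fin.
      apply: (le_trans (ZY w)).
      have h : 2 * t * Y w <= Y w ^+ 2 + t ^+ 2.
        by have := sqr_ge0 (Y w - t); nra.
      rewrite -subr_ge0.
      have -> : k / (2 * t) * Y w ^+ 2 + k * t / 2 - k * Y w =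
          k / (2 * t) * (Y w ^+ 2 + t ^+ 2 - 2 * t * Y w).
        by field; rewrite gt_eqF.
      by rewrite mulr_ge0 ?subr_ge0 // divr_ge0 ?(ltW k0) // mulr_ge0 // ltW.
  rewrite ge0_integralD //.
  - have h1 : (P : {measure set T -> \bar R}) [set: T] = 1%E by exact: probability_setT.
    rewrite integral_cst // h1.
    rewrite mule1 ge0_integralZl //.
    + by apply/measurable_EFinP.
    + by move=> w _; rewrite lee_fin sqr_ge0.
    + by rewrite lee_fin divr_ge0 ?(ltW k0) // mulr_ge0 // ltW.
  - move=> w _; rewrite -EFinM lee_fin mulr_ge0 ?sqr_ge0 //.
    by rewrite divr_ge0 ?(ltW k0) // mulr_ge0 // ltW.
  - apply: emeasurable_funM; first exact: measurable_cst.
    exact/measurable_EFinP.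
  - by move=> w _; rewrite lee_fin divr_ge0 ?mulr_ge0 // ltW.
have [M0|M0] := ltrP 0 M.
  have sM : 0 < Num.sqrt M by rewrite sqrtr_gt0.
  apply: (le_trans (key _ sM)); rewrite lee_fin le_eqVlt; apply/orP; left; apply/eqP.
  have hM2 : M = Num.sqrt M ^+ 2 by rewrite sqr_sqrtr // ltW.
  rewrite [in X in k / _ * X]hM2; field; by rewrite gt_eqF.
rewrite ler0_sqrtr // mulr0.
apply/lee_addgt0Pr => e e0; rewrite add0e.
have t0 : 0 < 2 * e / k by rewrite divr_gt0 // mulr_gt0.
apply: (le_trans (key _ t0)); rewrite lee_fin.
have -> : k * (2 * e / k) / 2 = e by field; rewrite gt_eqF.
rewrite gerDr; apply: mulr_ge0_le0 => //.
by rewrite divr_ge0 ?(ltW k0) // mulr_ge0 // ltW.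
Qed.

Lemma meas_norm2 (R : realType) (dsp : measure_display) (T : measurableType dsp) n
  (v : T -> 'cV[R]_n) :
  (forall i, measurable_fun setT (fun w => v w i 0)) ->
  measurable_fun setT (fun w => norm2 (v w)).
Proof.
move=> mv.
have -> : (fun w => norm2 (v w)) = Num.sqrt \o (fun w => \sum_(i < n) (v w i 0 * v w i 0)).
  by apply/funext => w.
apply: measurableT_comp; first by apply: continuous_measurable_fun; exact: sqrt_continuous.
by apply: measurable_sum => i; exact: measurable_funM.
Qed.

Lemma meas_affine (R : realType) (dsp : measure_display) (T : measurableType dsp) n
  (G : 'I_n -> T -> R) (b : 'I_n -> R) (a : R) :
  (forall j, measurable_fun setT (G j)) ->
  measurable_fun setT (fun w => \sum_(j < n) b j * G j w + a).
Proof.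
move=> mG; apply: measurable_funD; last exact: measurable_cst.
by apply: measurable_sum => j; apply: measurable_funM => //; exact: measurable_cst.
Qed.

Unset Implicit Arguments.
Set Strict Implicit.

Theorem lemma3p7
  (R : realType) (n m : nat)
  (X : set 'cV[R]_n)
  (f : 'cV[R]_n -> R) (gradf : 'cV[R]_n -> 'cV[R]_n)
  (c : 'cV[R]_n -> 'cV[R]_m) (Jc : 'cV[R]_n -> 'M[R]_(m, n))
  (L : R) (gamma : 'I_m -> R) (kappaH zeta M : R)
  (* Standing Assumption *)
  (HXopen : open X) (HXconv : convex_set_cV X)
  (Hfderiv : forall x v, X x -> is_derive x v f (dotv (gradf x) v))
  (Hgradcont : {in X, continuous gradf})
  (Hfbelow : exists lb : R, forall x, X x -> lb <= f x)
  (Hgradbd : exists B : R, forall x, X x -> norm2 (gradf x) <= B)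
  (HgradLip : forall x x', X x -> X x' ->
      norm2 (gradf x - gradf x') <= L * norm2 (x - x'))
  (Hcderiv : forall x v, X x -> is_derive x v c (Jc x *m v))
  (Hcbd : exists B : R, forall x, X x -> norm2 (c x) <= B)
  (HJbd : exists B : R, forall x i j, X x -> `|Jc x i j| <= B)
  (HJLip : forall (i : 'I_m) x x', X x -> X x' ->
      norm2 ((row i (Jc x))^T - (row i (Jc x'))^T) <= gamma i * norm2 (x - x'))
  (Hsing : exists s : R, 0 < s /\ forall x, X x -> singvals_ge (Jc x) s)
  (* Matrix Assumption constants *)
  (Hzeta : 0 < zeta) :
  exists kappad : R, 0 < kappad /\
  forall (x : 'cV[R]_n), X x ->
  forall (H : 'M[R]_n),
    H^T = H ->
    (forall u : 'cV[R]_n, norm2 (H *m u) <= kappaH * norm2 u) ->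
    (forall u : 'cV[R]_n, Jc x *m u = 0 -> zeta * norm2 u ^+ 2 <= dotv u (H *m u)) ->
  (* randomness of iteration k, conditioned on x_k = x *)
  forall (dsp : measure_display) (T : measurableType dsp)
         (P : probability T R) (gbar : T -> 'cV[R]_n),
    (forall i, measurable_fun setT (fun w => gbar w i ord0)) ->
    (forall i, P.-integrable setT (fun w => (gbar w i ord0)%:E)) ->
    (forall i, ('E_P[fun w => gbar w i ord0] = (gradf x i ord0)%:E)%E) ->
    ('E_P[fun w => (norm2 (gbar w - gradf x) ^+ 2)%R] <= M%:E)%E ->
  forall (dbar : T -> 'cV[R]_n) (ybar : T -> 'cV[R]_m)
         (dd : 'cV[R]_n) (yy : 'cV[R]_m)
         (ubar : T -> 'cV[R]_n) (uu vv : 'cV[R]_n),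
    (forall w, sqp_system H (Jc x) (gbar w) (c x) (dbar w) (ybar w)) ->
    sqp_system H (Jc x) (gradf x) (c x) dd yy ->
    (forall w, dbar w = ubar w + vv) -> (forall w, Jc x *m ubar w = 0) ->
    dd = uu + vv -> Jc x *m uu = 0 ->
    (exists z : 'cV[R]_m, vv = (Jc x)^T *m z) ->
    (forall i, ('E_P[fun w => dbar w i ord0] = (dd i ord0)%:E)%E) /\
    (forall i, ('E_P[fun w => ubar w i ord0] = (uu i ord0)%:E)%E) /\
    (forall i, ('E_P[fun w => ybar w i ord0] = (yy i ord0)%:E)%E) /\
    ('E_P[fun w => norm2 (dbar w - dd)] <= (kappad * Num.sqrt M)%R%:E)%E.
Proof.
case: Hsing => s [s0 hs].
exists zeta^-1; split; first by rewrite invr_gt0.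
move=> x Xx H Hsym HkH Hpos dsp T P gbar hmeas hint hE hM dbar ybar dd yy ubar uu vv
  hsys hsys0 hdu hJu hdd hJuu [z hz].
set J := Jc x.
set K := block_mx H J^T J 0.
have Ku : K \in unitmx := kkt_unit Hzeta Hpos s0 (hs x Xx).
have sol g d y : sqp_system H J g (c x) d y ->
    col_mx d y = invmx K *m col_mx (- g) (- c x).
  case=> h1 h2.
  have <- : K *m col_mx d y = col_mx (- g) (- c x).
    by rewrite mul_block_col mul0mx addr0 h1 h2.
  by rewrite mulKmx.
set A := invmx K.
have expand k r (v : 'cV[R]_n) : (A *m col_mx (- v) (- c x)) k ord0 + r =
    \sum_(j < n) (- A k (lshift m j)) * v j ord0 +
    (\sum_(j < m) A k (rshift n j) * (- c x) j ord0 + r).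
  rewrite mx_col_expand addrA; congr (_ + _ + _); apply: eq_bigr => j _.
  by rewrite mxE mulrN mulNr.
have Ecomp k r : ('E_P[fun w => ((A *m col_mx (- gbar w) (- c x)) k ord0 + r)%R] =
    (((A *m col_mx (- gradf x) (- c x)) k ord0 + r)%R)%:E)%E.
  under eq_fun do rewrite expand.
  rewrite expand; apply: (E_affine (G := fun j w => gbar w j ord0)) => //.
have dform w i : dbar w i ord0 = (A *m col_mx (- gbar w) (- c x)) (lshift m i) ord0.
  by rewrite -(sol _ _ _ (hsys w)) col_mxEu.
have dform0 i : dd i ord0 = (A *m col_mx (- gradf x) (- c x)) (lshift m i) ord0.
  by rewrite -(sol _ _ _ hsys0) col_mxEu.
have yform w i : ybar w i ord0 = (A *m col_mx (- gbar w) (- c x)) (rshift n i) ord0.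
  by rewrite -(sol _ _ _ (hsys w)) col_mxEd.
have yform0 i : yy i ord0 = (A *m col_mx (- gradf x) (- c x)) (rshift n i) ord0.
  by rewrite -(sol _ _ _ hsys0) col_mxEd.
split.
  move=> i.
  have -> : (fun w => dbar w i ord0) =
      (fun w => ((A *m col_mx (- gbar w) (- c x)) (lshift m i) ord0 + 0)%R).
    by apply/funext => w; rewrite dform addr0.
  by rewrite Ecomp addr0 dform0.
split.
  move=> i.
  have uform w : ubar w i ord0 = dbar w i ord0 + (- vv i ord0).
    by rewrite hdu mxE addrK.
  under eq_fun do rewrite uform dform.
  by rewrite Ecomp -dform0 hdd mxE addrK.
split.
  move=> i.
  have -> : (fun w => ybar w i ord0) =
      (fun w => ((A *m col_mx (- gbar w) (- c x)) (rshift n i) ord0 + 0)%R).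
    by apply/funext => w; rewrite yform addr0.
  by rewrite Ecomp addr0 yform0.
apply: (E_sqrt_bound (Y := fun w => norm2 (gbar w - gradf x))).
- by rewrite invr_gt0.
- apply: meas_norm2 => i /=.
  under eq_fun do rewrite mxE mxE.
  apply: measurable_funB => //; exact: measurable_cst.
- apply: meas_norm2 => i /=.
  have -> : (fun w => (dbar w - dd) i 0) =
      (fun w => (A *m col_mx (- gbar w) (- c x)) (lshift m i) ord0 + (- dd i ord0)).
    by apply/funext => w; rewrite -dform !mxE.
  under eq_fun do rewrite expand.
  exact: (meas_affine (G := fun j w => gbar w j ord0)).
- by move=> w; exact: norm2_ge0.
- move=> w; apply: (key Hzeta (Hpos) (z := ybar w - yy)).
  + case: (hsys w) => h1 _; case: hsys0 => h1' _.
    rewrite /J in h1 h1' *. by rewrite mulmxBr mulmxBr addrACA -opprD h1 h1' opprB opprK addrC.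
  + case: (hsys w) => _ h2; case: hsys0 => _ h2'.
    by rewrite mulmxBr h2 h2' subrr.
- by [].
Qed.
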